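(* Consider instances of the Stable Matching Problem with Couples (SMP-C) that possess a resident optimal matching, and let $y$ be the mechanism that maps each such instance (given by the stated ROLs) to its resident optimal matching. Then: (1) (Truncation-proofness.) Let $\mathcal{I}$ be an SMP-C instance with resident optimal matching $\mu^*$, where all ROLs are the participants' true preferences. Let $a$ be a single doctor or a couple, and let $\mathcal{I}'$ be the instance obtained from $\mathcal{I}$ by replacing $a$'s ROL with a truncation of it, all other ROLs unchanged. If $\mathcal{I}'$ has a resident optimal matching $\mu'$, then it is not the case that $\mu'(a) \succ_a \mu^*(a)$, where $\succ_a$ is $a$'s true (original) preference. That is, $y$ is strategy-proof for residents when residents may only misreport via truncation. (2) (Reordering can be profitable.) $y$ is not in general strategy-proof when residents may misreport via reordering: there exists an SMP-C instance $\mathcal{I}$ (with true preferences) that has a unique stable matching $\mu^*$ (hence $\mu^*$ is resident optimal), a single doctor $d$, and a reordering of $d$'s ROL (a permutation of the same acceptable programs), all other ROLs unchanged, such that the resulting instance $\mathcal{I}'$ has a resident optimal matching $\mu'$ with $\mu'(d) \succ_d \mu^*(d)$ according to $d$'s true preferences.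
   Context: An SMP-C instance consists of a finite set $D$ of doctors, a finite set $P$ of programs, and a special element $\mathit{nil}$; write $D^+=D\cup\{\mathit{nil}\}$, $P^+=P\cup\{\mathit{nil}\}$. $D$ is partitioned into singles $S$ and coupled doctors $D\setminus S$; the couples form a set $C\subseteq (D\setminus S)\times(D\setminus S)$ of pairs such that every coupled doctor belongs to exactly one pair. Each program $p$ has a quota $q_p\ge 1$. Each participant gives a ranked order list (ROL), a strictly ordered list terminated by $\mathit{nil}$: singles rank elements of $P$, couples rank pairs in $P^+\times P^+$ (terminated by $(\mathit{nil},\mathit{nil})$), programs rank doctors. For a participant $a$, $x \succeq_a y$ means $x$ appears no later than $y$ on $a$'s ROL (or $x=y$); $x$ is acceptable to $a$ if $x\succeq_a \mathit{nil}$; alternatives not on the ROL are unacceptable. For a program $p$ and set $R$ of doctors, $\mathrm{ch}_p(R)$ is the maximal subset of $R$ consisting of acceptable doctors, of size at most $q_p$, such that every chosen doctor is ranked by $p$ above every unchosen doctor of $R$; $\mathrm{ch}_{\mathit{nil}}(R)=R$. A matching $\mu$ maps $D\to P^+$; $\mu^{-1}(p)$ is the set of doctors matched to $p$; for a couple $c=(d_1,d_2)$, $\mu(c)=(\mu(d_1),\mu(d_2))$. Let $\mathit{willAccept}(p,R,\mu)$ mean $R\subseteq \mathrm{ch}_p(\mu^{-1}(p)\cup R)$. Blocking pairs: (i) a single $d$ and $p\in P$ with $p\succ_d\mu(d)$ and $\mathit{willAccept}(p,\{d\},\mu)$; (ii) a couple $c=(d_1,d_2)$ and $(p_1,p_2)\in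 P^+\times P^+$ with $p_1\ne p_2$, $(p_1,p_2)\succ_c\mu(c)$, $\mathit{willAccept}(p_1,\{d_1\},\mu)$ and $\mathit{willAccept}(p_2,\{d_2\},\mu)$; (iii) a couple $c=(d_1,d_2)$ and $p\in P$ with $(p,p)\succ_c \mu(c)$ and $\mathit{willAccept}(p,\{d_1,d_2\},\mu)$. $\mu$ is individually rational if every single gets an acceptable program (or $\mathit{nil}$), every couple gets an acceptable pair (or $(\mathit{nil},\mathit{nil})$), and every program $p$ has $|\mu^{-1}(p)|\le q_p$ with all its matched doctors acceptable to it. $\mu$ is stable if it is individually rational and has no blocking pair. For matchings $\mu_1,\mu_2$, write $\mu_1\succeq_R\mu_2$ if $\mu_1(a)\succeq_a\mu_2(a)$ for every single and every couple $a$. A matching $\mu$ is resident optimal if it is stable and $\mu\succeq_R\mu'$ for every stable matching $\mu'$. A truncation of $a$'s ROL keeps an initial segment of the ROL (then terminated by $\mathit{nil}$, resp. $(\mathit{nil},\mathit{nil})$), making all later entries unacceptable. A reordering of $a$'s ROL lists the same acceptable alternatives in a different order. *)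

(* Defs.v *)
From mathcomp Require Import all_boot.
Set Implicit Arguments. Unset Strict Implicit. Unset Printing Implicit Defensive.

(* nil is represented by [None] (programs) and [(None, None)] (couple pairs).  *)
(* A ROL is stored as the sequence of its acceptable alternatives, in order;  *)
(* the terminating nil is implicit (it sits at position [size s]).           *)

Section SMPC.
Variables (D P : finType).

Record instance := Instance {
  single : {set D};
  couples : {set D * D};
  quota : P -> nat;
  rolS : D -> seq P;
  rolC : D * D -> seq (option P * option P);
  rolP : P -> seq D
}.

Definition wf (I : instance) : Prop :=
  (forall p, 1 <= quota I p) /\
  (forall d, d \in single I -> uniq (rolS I d)) /\
  (forall c, c \in couples I -> uniq (rolC I c) /\ (None, None) \notin rolC I c) /\
  (forall p, uniq (rolP I p)) /\
  (forall c, c \in couples I ->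
     [/\ c.1 \notin single I, c.2 \notin single I & c.1 != c.2]) /\
  (forall d, d \notin single I ->
     #|[set c in couples I | (c.1 == d) || (c.2 == d)]| = 1).

(* Position of an alternative on a ROL [s] terminated by [nilx]; unlisted    *)
(* (unacceptable) alternatives come after nil.                                *)
Definition rk (X : eqType) (nilx : X) (s : seq X) (x : X) : nat :=
  if x == nilx then size s else if x \in s then index x s else (size s).+1.

Definition rkS (I : instance) (d : D) (x : option P) : nat :=
  rk None (map Some (rolS I d)) x.
Definition rkC (I : instance) (c : D * D) (x : option P * option P) : nat :=
  rk (None, None) (rolC I c) x.

Definition ch_feasible (I : instance) (p : P) (R X : {set D}) : bool :=
  [&& X \subset R,
      [forall d in X, d \in rolP I p],
      #|X| <= quota I p &
      [forall d in X, forall d' in R :\: X,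
         index d (rolP I p) < index d' (rolP I p)]].

Definition ch (I : instance) (p : option P) (R : {set D}) : {set D} :=
  match p with
  | None => R
  | Some p => odflt set0 [pick X | maxset (ch_feasible I p R) X]
  end.

Definition matching := D -> option P.

Definition assigned (mu : matching) (p : P) : {set D} := [set d | mu d == Some p].

Definition willAccept (I : instance) (p : option P) (R : {set D}) (mu : matching) : Prop :=
  match p with
  | None => R \subset ch I None R
  | Some q => R \subset ch I (Some q) (assigned mu q :|: R)
  end.

Definition muC (mu : matching) (c : D * D) := (mu c.1, mu c.2).

Definition individually_rational (I : instance) (mu : matching) : Prop :=
  (forall d, d \in single I -> rkS I d (mu d) <= rkS I d None) /\
  (forall c, c \in couples I -> rkC I c (muC mu c) <= rkC I c (None, None)) /\
  (forall p, #|assigned mu p| <= quota I p /\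
             forall d, d \in assigned mu p -> d \in rolP I p).

Definition blocking_single (I : instance) (mu : matching) (d : D) (p : P) : Prop :=
  d \in single I /\ rkS I d (Some p) < rkS I d (mu d) /\
  willAccept I (Some p) [set d] mu.

Definition blocking_couple2 (I : instance) (mu : matching) (c : D * D)
  (pp : option P * option P) : Prop :=
  c \in couples I /\ pp.1 != pp.2 /\ rkC I c pp < rkC I c (muC mu c) /\
  willAccept I pp.1 [set c.1] mu /\ willAccept I pp.2 [set c.2] mu.

Definition blocking_couple1 (I : instance) (mu : matching) (c : D * D) (p : P) : Prop :=
  c \in couples I /\ rkC I c (Some p, Some p) < rkC I c (muC mu c) /\
  willAccept I (Some p) [set c.1; c.2] mu.

Definition stable (I : instance) (mu : matching) : Prop :=
  individually_rational I mu /\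
  (forall d p, ~ blocking_single I mu d p) /\
  (forall c pp, ~ blocking_couple2 I mu c pp) /\
  (forall c p, ~ blocking_couple1 I mu c p).

Definition resident_optimal (I : instance) (mu : matching) : Prop :=
  stable I mu /\
  forall mu', stable I mu' ->
    (forall d, d \in single I -> rkS I d (mu d) <= rkS I d (mu' d)) /\
    (forall c, c \in couples I -> rkC I c (muC mu c) <= rkC I c (muC mu' c)).

Definition replS (I : instance) (d : D) (s : seq P) : instance :=
  Instance (single I) (couples I) (quota I)
    (fun d' => if d' == d then s else rolS I d') (rolC I) (rolP I).
Definition replC (I : instance) (c : D * D) (s : seq (option P * option P)) : instance :=
  Instance (single I) (couples I) (quota I) (rolS I)
    (fun c' => if c' == c then s else rolC I c') (rolP I).

End SMPC.

(* Main.v *)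
Require Import Defs.
From mathcomp Require Import all_boot.
From Stdlib Require Import FunctionalExtensionality.
Set Implicit Arguments. Unset Strict Implicit. Unset Printing Implicit Defensive.

Lemma rk_take (X : eqType) (n : X) (s : seq X) k x y :
  rk n (take k s) y <= rk n (take k s) n -> y != n ->
  rk n s x < rk n s y -> rk n (take k s) x < rk n (take k s) y.
Proof.
move=> h1 hyn; move: h1; rewrite /rk eqxx (negbTE hyn).
case: ifP => hy; last by rewrite ltnn.
move=> _.
have ys : y \in s by apply: mem_take hy.
have iy : index y (take k s) = index y s.
  by rewrite -{2}(cat_take_drop k s) index_cat hy.
rewrite ys iy.
case: eqP => [_|_].
  by rewrite ltnNge ltnW // index_mem.
case: ifP => xs; last by rewrite ltnNge ltnW // ltnS ltnW // index_mem.
move=> hxy.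
have iyk : index y s < k by apply: index_ltn.
have xt : x \in take k s by rewrite in_take // (ltn_trans hxy iyk).
case: ifP => [_|/negbT /negP []]; last exact: xt.
have ix : index x (take k s) = index x s.
  by rewrite -{2}(cat_take_drop k s) index_cat xt.
by rewrite ix.
Qed.

Section P1.
Variables D P : finType.

Lemma part1S (I : instance D P) (mu : matching D P) d k mu' :
  resident_optimal I mu -> d \in single I ->
  resident_optimal (replS I d (take k (rolS I d))) mu' ->
  ~ (rkS I d (mu' d) < rkS I d (mu d)).
Proof.
move=> [[[ir1 [ir2 ir3]] _] hopt] hd [[[jr1 [jr2 jr3]] [bs [bc2 bc1]]] _] hlt.
have hir : rkS I d (mu d) <= rkS I d None by apply: ir1.
have hne : mu' d != None.
  apply/eqP => e; rewrite e in hlt.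
  by move: (leq_trans hlt hir); rewrite ltnn.
have key : forall x, rkS I d x < rkS I d (mu' d) ->
    rkS (replS I d (take k (rolS I d))) d x <
    rkS (replS I d (take k (rolS I d))) d (mu' d).
  move=> x hx; rewrite /rkS /= eqxx map_take.
  apply: rk_take => //.
  have := jr1 d hd; by rewrite /rkS /= eqxx map_take.
have st : stable I mu'.
  split; [split; [|split]|split; [|split]].
  - move=> d0 hd0; case: (eqVneq d0 d) => [->|ne].
      by apply: ltnW; apply: leq_trans hlt hir.
    have := jr1 d0 hd0; by rewrite /rkS /= (negbTE ne).
  - exact: jr2.
  - exact: jr3.
  - move=> d0 p [hd0 [hl hw]]; apply: (bs d0 p); split => //; split => //.
    case: (eqVneq d0 d) => [e|ne]; first by subst d0; apply: key.
    by rewrite /rkS /= (negbTE ne).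
  - exact: bc2.
  - exact: bc1.
have := (hopt mu' st).1 d hd.
by rewrite leqNgt hlt.
Qed.

Lemma part1C (I : instance D P) (mu : matching D P) c k mu' :
  resident_optimal I mu -> c \in couples I ->
  resident_optimal (replC I c (take k (rolC I c))) mu' ->
  ~ (rkC I c (muC mu' c) < rkC I c (muC mu c)).
Proof.
move=> [[[ir1 [ir2 ir3]] _] hopt] hc [[[jr1 [jr2 jr3]] [bs [bc2 bc1]]] _] hlt.
have hir : rkC I c (muC mu c) <= rkC I c (None, None) by apply: ir2.
have hne : muC mu' c != (None, None).
  apply/eqP => e; rewrite e in hlt.
  by move: (leq_trans hlt hir); rewrite ltnn.
have key : forall x, rkC I c x < rkC I c (muC mu' c) ->
    rkC (replC I c (take k (rolC I c))) c x <
    rkC (replC I c (take k (rolC I c))) c (muC mu' c).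
  move=> x hx; rewrite /rkC /= eqxx.
  apply: rk_take => //.
  have := jr2 c hc; by rewrite /rkC /= eqxx.
have st : stable I mu'.
  split; [split; [|split]|split; [|split]].
  - exact: jr1.
  - move=> c0 hc0; case: (eqVneq c0 c) => [->|ne].
      by apply: ltnW; apply: leq_trans hlt hir.
    have := jr2 c0 hc0; by rewrite /rkC /= (negbTE ne).
  - exact: jr3.
  - exact: bs.
  - move=> c0 pp [hc0 [hp [hl hw]]]; apply: (bc2 c0 pp); split => //; split => //; split => //.
    case: (eqVneq c0 c) => [e|ne]; first by subst c0; apply: key.
    by rewrite /rkC /= (negbTE ne).
  - move=> c0 p [hc0 [hl hw]]; apply: (bc1 c0 p); split => //; split => //.
    case: (eqVneq c0 c) => [e|ne]; first by subst c0; apply: key.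
    by rewrite /rkC /= (negbTE ne).
have := (hopt mu' st).2 c hc.
by rewrite leqNgt hlt.
Qed.
End P1.

Section Refl.
Variables D P : finType.
Implicit Types (I : instance D P) (mu : matching D P).

Lemma ch1P I p (R : {set D}) d : quota I p = 1 ->
  reflect (d \in R /\ d \in rolP I p /\
     forall d', d' \in R -> d' \in rolP I p -> index d (rolP I p) <= index d' (rolP I p))
  (d \in ch I (Some p) R).
Proof.
move=> hq; rewrite /ch.
case: pickP => [X hX | hnone]; last first.
  exfalso.
  have f0 : ch_feasible I p R set0.
    apply/and4P; split; rewrite ?sub0set ?cards0 //.
      by apply/forall_inP => x; rewrite inE.
    by apply/forall_inP => x; rewrite inE.
  have [A hA _] := maxset_exists f0.
  by move: (hnone A); rewrite hA.
have [/and4P [hXR hXacc hXc hXtop] hmax] := maxsetP hX.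
apply: (iffP idP) => /=.
  move=> dX; split; first exact: (subsetP hXR).
  split; first exact: (forall_inP hXacc).
  move=> d' d'R d'a.
  case: (boolP (d' \in X)) => d'X.
    have e : d' = d.
      apply/eqP; apply: contraLR hXc; rewrite hq -ltnNge => ne.
      have : #|[set d'; d]| <= #|X|.
        apply: subset_leq_card; apply/subsetP => z; rewrite !inE.
        by case/orP => /eqP ->.
      by rewrite cards2 ne.
    by rewrite e.
  apply: ltnW; move/forall_inP: hXtop => /(_ d dX) /forall_inP; apply.
  by rewrite inE d'X.
move=> [dR [da dtop]].
apply/negPn/negP => dX.
case: (set_0Vmem X) => [X0 | [x xX]].
  have fB : ch_feasible I p R [set d].
    apply/and4P; split.
    - by rewrite sub1set.
    - by apply/forall_inP => z; rewrite inE => /eqP ->.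
    - by rewrite cards1 hq.
    apply/forall_inP => z; rewrite inE => /eqP ->.
    apply/forall_inP => w /setDP [wR]; rewrite inE => wd.
    case: (boolP (w \in rolP I p)) => wa.
      rewrite ltn_neqAle dtop //; rewrite andbT; apply: contra wd => /eqP e.
      by apply/eqP; apply: (index_inj w wa da); rewrite e.
    by rewrite (memNindex wa) index_mem.
  have := hmax _ fB; rewrite X0 sub0set => /(_ isT) /setP /(_ d).
  by rewrite !inE eqxx.
have xd : x \in R :\: X -> False by rewrite inE xX.
have hlt : index x (rolP I p) < index d (rolP I p).
  move/forall_inP: hXtop => /(_ x xX) /forall_inP; apply.
  by rewrite inE dX.
have xR : x \in R by apply: (subsetP hXR).
have xa : x \in rolP I p by apply: (forall_inP hXacc).
by move: (dtop x xR xa); rewrite leqNgt hlt.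
Qed.

Definition wac I (dl : seq D) mu (q : P) (d : D) : bool :=
  (d \in rolP I q) && all (fun d' => (mu d' == Some q) ==> (d' \in rolP I q) ==>
     (index d (rolP I q) <= index d' (rolP I q))) dl.

Lemma wacP I dl mu q d : (forall x, x \in dl) -> quota I q = 1 ->
  willAccept I (Some q) [set d] mu <-> wac I dl mu q d.
Proof.
move=> hdl hq; rewrite /willAccept sub1set; split.
  move/(ch1P _ _ hq) => [_ [da dtop]]; rewrite /wac da /=.
  apply/allP => d' _; apply/implyP => e; apply/implyP => d'a.
  by apply: dtop => //; rewrite !inE e.
move=> /andP [da /allP hall]; apply/(ch1P _ _ hq); split; first by rewrite !inE eqxx orbT.
split => // d'; rewrite !inE => /orP [e|/eqP ->] d'a //.
by have /implyP /(_ e) /implyP /(_ d'a) := hall d' (hdl d').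
Qed.

Lemma wa2 I q d1 d2 mu : quota I q = 1 -> d1 != d2 ->
  ~ willAccept I (Some q) [set d1; d2] mu.
Proof.
move=> hq ne; rewrite /willAccept => /subsetP hs.
have := hs d1; rewrite !inE eqxx => /(_ isT) /(ch1P _ _ hq) [h1R [h1a h1t]].
have := hs d2; rewrite !inE eqxx orbT => /(_ isT) /(ch1P _ _ hq) [h2R [h2a h2t]].
have e : index d1 (rolP I q) = index d2 (rolP I q).
  by apply/eqP; rewrite eqn_leq h1t // h2t.
by move: ne; rewrite (index_inj d1 h1a h2a e) eqxx.
Qed.

Definition wao I dl mu (po : option P) (d : D) : bool :=
  if po is Some q then wac I dl mu q d else true.

Lemma waoP I dl mu po d : (forall x, x \in dl) -> (forall p, quota I p = 1) ->
  willAccept I po [set d] mu <-> wao I dl mu po d.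
Proof.
move=> hdl hq; case: po => [q|] /=; first exact: wacP.
by rewrite /willAccept /ch subxx.
Qed.

Lemma card_count (dl : seq D) (f : pred D) : (forall x, x \in dl) -> uniq dl ->
  #|[set d | f d]| = count f dl.
Proof.
move=> hdl udl; rewrite -size_filter.
have u : uniq (filter f dl) by rewrite filter_uniq.
rewrite -(card_uniqP u); apply: eq_card => x.
by rewrite inE mem_filter hdl andbT.
Qed.

Definition stablec I (dl : seq D) (pl : seq P) (sl : seq D) (cl : seq (D * D)) mu : bool :=
  let opl := None :: map Some pl in
  [&& all (fun d => rkS I d (mu d) <= rkS I d None) sl,
      all (fun c => rkC I c (muC mu c) <= rkC I c (None, None)) cl,
      all (fun p => (count (fun d => mu d == Some p) dl <= quota I p) &&
                    all (fun d => (mu d == Some p) ==> (d \in rolP I p)) dl) pl,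
      all (fun d => all (fun p => ~~ ((rkS I d (Some p) < rkS I d (mu d)) && wac I dl mu p d)) pl) sl &
      all (fun c => all (fun pp => ~~ [&& pp.1 != pp.2, rkC I c pp < rkC I c (muC mu c),
                                         wao I dl mu pp.1 c.1 & wao I dl mu pp.2 c.2])
                       [seq (x, y) | x <- opl, y <- opl]) cl].

Lemma stablecP I dl pl sl cl mu :
  (forall d, d \in dl) -> uniq dl -> (forall p, p \in pl) ->
  (forall d, (d \in single I) = (d \in sl)) ->
  (forall c, (c \in couples I) = (c \in cl)) ->
  (forall p, quota I p = 1) ->
  (forall c, c \in couples I -> c.1 != c.2) ->
  stable I mu <-> stablec I dl pl sl cl mu.
Proof.
move=> hdl udl hpl hs hc hq hcd.
have hopl : forall po : option P, po \in None :: map Some pl.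
  by case=> [p|]; rewrite inE ?mem_map ?hpl ?orbT //; move=> x y [].
split.
  move=> [[ir1 [ir2 ir3]] [bs [bc2 bc1]]].
  apply/and5P; split.
  - by apply/allP => d; rewrite -hs; apply: ir1.
  - by apply/allP => c; rewrite -hc; apply: ir2.
  - apply/allP => p _; apply/andP; split.
      by rewrite -card_count //; case: (ir3 p).
    apply/allP => d _; apply/implyP => e; apply: (ir3 p).2; by rewrite inE.
  - apply/allP => d; rewrite -hs => hd; apply/allP => p _.
    apply/negP => /andP [hlt hw]; apply: (bs d p); split => //; split => //.
    exact/(wacP _ _ hdl (hq p)).
  - apply/allP => c; rewrite -hc => hcin; apply/allP => -[p1 p2] _.
    apply/negP => /and4P [hne hlt w1 w2]; apply: (bc2 c (p1, p2)).
    by do 3 split => //; split; apply/(waoP _ _ _ hdl hq).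
move=> /and5P [/allP ir1 /allP ir2 /allP ir3 /allP bs /allP bc2].
split; [split; [|split]|split; [|split]].
- by move=> d; rewrite hs; apply: ir1.
- by move=> c; rewrite hc; apply: ir2.
- move=> p; have /andP [hcnt /allP hacc] := ir3 p (hpl p); split.
    by rewrite (card_count _ hdl udl).
  move=> d; rewrite inE => e; have := hacc d (hdl d); by rewrite e.
- move=> d p [hd [hlt hw]]; rewrite hs in hd.
  have /allP /(_ p (hpl p)) := bs d hd.
  by rewrite hlt /= (proj1 (wacP _ _ hdl (hq p)) hw).
- move=> c [p1 p2] [hcin [hne [hlt [w1 w2]]]]; rewrite hc in hcin.
  have /allP /(_ (p1, p2)) := bc2 c hcin.
  rewrite allpairs_f ?hopl // => /(_ isT).
  by rewrite hne hlt (proj1 (waoP _ _ _ hdl hq) w1) (proj1 (waoP _ _ _ hdl hq) w2).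
- move=> c p [hcin [_ hw]].
  exact: (wa2 (hq p) (hcd c hcin) hw).
Qed.
End Refl.

Definition DD : finType := option bool.
Definition PP : finType := bool.
Definition sA : DD := None.
Definition aA : DD := Some true.
Definition bA : DD := Some false.

Definition I0 : instance DD PP :=
  Instance [set sA] [set (aA, bA)] (fun _ => 1)
    (fun _ => [:: false; true])
    (fun _ => [:: (Some false, None); (Some true, Some false)])
    (fun p => if p then [:: bA; aA; sA] else [:: bA; sA; aA]).

Definition mu0 : matching DD PP := fun d => d.
Definition I1 := replS I0 sA [:: true; false].
Definition mu1 : matching DD PP :=
  fun d => match d with None => Some true | Some true => Some false | Some false => None end.

Definition dl : seq DD := [:: sA; aA; bA].
Definition pl : seq PP := [:: true; false].
Definition sl : seq DD := [:: sA].
Definition cl : seq (DD * DD) := [:: (aA, bA)].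
Definition opl : seq (option PP) := [:: None; Some true; Some false].

Definition mkm (x y z : option PP) : matching DD PP :=
  fun d => match d with None => x | Some true => y | Some false => z end.

Lemma all_mats (f : matching DD PP -> bool) :
  all (fun x => all (fun y => all (fun z => f (mkm x y z)) opl) opl) opl ->
  forall mu, f mu.
Proof.
move=> h mu.
have -> : mu = mkm (mu None) (mu (Some true)) (mu (Some false)).
  by apply: functional_extensionality => -[[]|].
have hop : forall o : option PP, o \in opl by case=> [[]|].
move/allP: h => /(_ _ (hop (mu None))) /allP /(_ _ (hop (mu (Some true)))) /allP.
by move=> /(_ _ (hop (mu (Some false)))).
Qed.

Lemma hdl : forall d : DD, d \in dl. Proof. by case=> [[]|]. Qed.
Lemma udl : uniq dl. Proof. by []. Qed.
Lemma hpl : forall p : PP, p \in pl. Proof. by case. Qed.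
Lemma hs0 : forall d, (d \in single I0) = (d \in sl). Proof. by move=> d; rewrite !inE. Qed.
Lemma hc0 : forall c, (c \in couples I0) = (c \in cl). Proof. by move=> c; rewrite !inE. Qed.
Lemma hq0 : forall p, quota I0 p = 1. Proof. by []. Qed.
Lemma hcd0 : forall c, c \in couples I0 -> c.1 != c.2.
Proof. by move=> c; rewrite inE => /eqP ->. Qed.

Lemma stP0 mu : stable I0 mu <-> stablec I0 dl pl sl cl mu.
Proof. apply: stablecP. exact: hdl. exact: udl. exact: hpl. exact: hs0. exact: hc0. exact: hq0. exact: hcd0. Qed.
Lemma stP1 mu : stable I1 mu <-> stablec I1 dl pl sl cl mu.
Proof. apply: stablecP. exact: hdl. exact: udl. exact: hpl. exact: hs0. exact: hc0. exact: hq0. exact: hcd0. Qed.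

Lemma wf0 : wf I0.
Proof.
split; first by [].
split; first by move=> d; rewrite /= inE.
split; first by move=> c; rewrite inE => /eqP -> /=.
split; first by case.
split; first by move=> c; rewrite inE => /eqP -> /=; rewrite !inE.
move=> d; rewrite /= inE => hd.
rewrite (_ : [set c in [set (aA, bA)] | (c.1 == d) || (c.2 == d)] = [set (aA, bA)]) ?cards1 //.
apply/setP => c; rewrite !inE; case: (eqVneq c (aA, bA)) => [->|] //=.
by move: hd; case: d => [[]|].
Qed.

Lemma st0 : stable I0 mu0.
Proof. by apply/stP0; vm_compute. Qed.

Lemma uniq0 : forall mu2, stable I0 mu2 -> mu2 =1 mu0.
Proof.
have := @all_mats (fun mu2 => stablec I0 dl pl sl cl mu2 ==>
   [&& mu2 None == None, mu2 (Some true) == Some true & mu2 (Some false) == Some false]).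
move=> /(_ ltac:(vm_compute; reflexivity)) h mu2 /stP0 hst.
move/implyP: (h mu2) => /(_ hst) /and3P [/eqP e1 /eqP e2 /eqP e3].
by case=> [[]|].
Qed.

Lemma ro1 : resident_optimal I1 mu1.
Proof.
split; first by apply/stP1; vm_compute.
have := @all_mats (fun mu2 => stablec I1 dl pl sl cl mu2 ==>
   (all (fun d => rkS I1 d (mu1 d) <= rkS I1 d (mu2 d)) sl &&
    all (fun c => rkC I1 c (muC mu1 c) <= rkC I1 c (muC mu2 c)) cl)).
move=> /(_ ltac:(vm_compute; reflexivity)) h mu2 /stP1 hst.
move/implyP: (h mu2) => /(_ hst) /andP [/allP h1 /allP h2].
split.
  by move=> d hd; apply: h1; rewrite -hs0.
by move=> c hc; apply: h2; rewrite -hc0.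
Qed.

Lemma part2 : exists (D P : finType) (I : instance D P) (mu : matching D P),
     wf I /\ stable I mu /\ (forall mu2, stable I mu2 -> mu2 =1 mu) /\
     exists (d : D) (s : seq P) (mu' : matching D P),
       [/\ d \in single I, perm_eq s (rolS I d), s != rolS I d,
           resident_optimal (replS I d s) mu' &
           rkS I d (mu' d) < rkS I d (mu d)].
Proof.
exists DD, PP, I0, mu0; split; first exact: wf0.
split; first exact: st0.
split; first exact: uniq0.
exists sA, [:: true; false], mu1; split.
- by rewrite inE.
- by [].
- by [].
- exact: ro1.
- by vm_compute.
Qed.

Theorem theorem1 :
  (* (1) truncation-proofness *)
  (forall (D P : finType) (I : instance D P) (mu : matching D P),
     wf I -> resident_optimal I mu ->
     (forall (d : D) (k : nat) (mu' : matching D P),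
        d \in single I ->
        resident_optimal (replS I d (take k (rolS I d))) mu' ->
        ~ (rkS I d (mu' d) < rkS I d (mu d))) /\
     (forall (c : D * D) (k : nat) (mu' : matching D P),
        c \in couples I ->
        resident_optimal (replC I c (take k (rolC I c))) mu' ->
        ~ (rkC I c (muC mu' c) < rkC I c (muC mu c)))) /\
  (* (2) reordering can be profitable *)
  (exists (D P : finType) (I : instance D P) (mu : matching D P),
     wf I /\ stable I mu /\ (forall mu2, stable I mu2 -> mu2 =1 mu) /\
     exists (d : D) (s : seq P) (mu' : matching D P),
       [/\ d \in single I, perm_eq s (rolS I d), s != rolS I d,
           resident_optimal (replS I d s) mu' &
           rkS I d (mu' d) < rkS I d (mu d)]).
Proof.
split; last exact: part2.
move=> D P I mu _ hro; split.
  move=> d k mu' hd hro'; exact: part1S hro hd hro'.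
move=> c k mu' hc hro'; exact: part1C hro hc hro'.
Qed.
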